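(* Let $\mathbb K$ be a field with $2\in\mathbb K^\times$, $A$ a unital commutative associative $\mathbb K$-algebra, $\mathfrak k$ a $\mathbb K$-Lie algebra and $\mathfrak g=A\otimes\mathfrak k$. Then $$P(Z_2(\mathfrak g))=(\Lambda^2(A)\otimes S^2(\mathfrak k))\oplus(A\otimes Z_2(\mathfrak k))\oplus(I_A\otimes\Lambda^2(\mathfrak k)).$$
   Context: $\mathfrak g$ has bracket $[a\otimes x,a'\otimes x']=aa'\otimes[x,x']$, $ax=a\otimes x$, unit $\mathbf 1$. $v\wedge w=\tfrac12(v\otimes w-w\otimes v)$, $v\vee w=\tfrac12(v\otimes w+w\otimes v)$. For a Lie algebra $\mathfrak h$, $Z_2(\mathfrak h)$ is the kernel of $\Lambda^2(\mathfrak h)\to\mathfrak h$, $u\wedge v\mapsto[u,v]$. $I_A$ is the kernel of multiplication $S^2(A)\to A$. $P=(p_1,p_2,p_3)$ is the linear isomorphism $\Lambda^2(\mathfrak g)\to(\Lambda^2(A)\otimes S^2(\mathfrak k))\oplus(A\otimes\Lambda^2(\mathfrak k))\oplus(I_A\otimes\Lambda^2(\mathfrak k))$ with $p_1(ax\wedge by)=a\wedge b\otimes x\vee y$, $p_2(ax\wedge by)=ab\otimes x\wedge y$, $p_3(ax\wedge by)=(a\vee b-ab\vee\mathbf 1)\otimes x\wedge y$. *)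

(* Defs.v *)
From HB Require Import structures.
From mathcomp Require Import all_boot all_order all_algebra.
From mathcomp Require Import boolp functions.
Set Implicit Arguments. Unset Strict Implicit. Unset Printing Implicit Defensive.
Import GRing.Theory.
Local Open Scope ring_scope.

Section Tensor.
Variable K : fieldType.

Record bil (V W : lmodType K) := Bil {
  bil_fun :> V -> W -> K;
  bil_linl : forall (a : K) v v' w, bil_fun (a *: v + v') w = a * bil_fun v w + bil_fun v' w;
  bil_linr : forall (a : K) v w w', bil_fun v (a *: w + w') = a * bil_fun v w + bil_fun v w' }.

Variables V W : lmodType K.

Lemma bil0l (b : bil V W) w : b 0 w = 0.
Proof.
have := bil_linl b 1 0 0 w; rewrite scale1r addr0 mul1r => H.
by apply: (@addrI _ (b 0 w)); rewrite addr0 -H.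
Qed.

Lemma bilZl (b : bil V W) (a : K) v w : b (a *: v) w = a * b v w.
Proof. by rewrite -[a *: v]addr0 bil_linl bil0l addr0. Qed.

(* the functional on bilinear forms given by a formal sum  sum_i v_i (x) w_i *)
Definition ev (s : seq (V * W)) : bil V W -> K^o :=
  fun b => \sum_(p <- s) b p.1 p.2.

Definition is_tens (f : bil V W -> K^o) : bool := `[< exists s, f = ev s >].

Lemma is_tens_closed : submod_closed is_tens.
Proof.
split.
  apply/asboolP; exists [::]; apply/funext => b; rewrite /ev big_nil //.
move=> a u v /asboolP [s ->] /asboolP [t ->]; apply/asboolP.
exists ([seq (a *: p.1, p.2) | p <- s] ++ t); apply/funext => b.
rewrite /ev big_cat big_map /=.
have -> : \sum_(i <- s) b (a *: i.1) i.2 = a * \sum_(p <- s) b p.1 p.2.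
  by rewrite mulr_sumr; apply: eq_bigr => p _; rewrite bilZl.
by [].
Qed.

HB.instance Definition _ := GRing.isSubmodClosed.Build K (bil V W -> K^o) is_tens
  is_tens_closed.

(* The tensor product V (x)_K W, realised as the span of the pure tensors
   inside the dual of the space of bilinear forms on V x W. *)
Record tensor := Tensor { tval : bil V W -> K^o; tvalP : is_tens tval }.
HB.instance Definition _ := [isSub for tval].
HB.instance Definition _ := [Choice of tensor by <:].
HB.instance Definition _ := [SubChoice_isSubLmodule of tensor by <:].

Definition tens (v : V) (w : W) : tensor.
Proof. apply: (@Tensor (ev [:: (v, w)])); apply/asboolP; by exists [:: (v, w)]. Defined.

(* a chosen representation t = sum_i v_i (x) w_i, used to define maps by
   linear extension of their values on pure tensors *)
Definition trepr (t : tensor) : seq (V * W) :=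
  projT1 (cid (elimT (asboolP _) (tvalP t))).

End Tensor.

Arguments tens {K V W}.
Arguments trepr {K V W}.

Section Constructions.
Variable K : fieldType.

Definition wedge (V : lmodType K) (v w : V) : tensor V V :=
  2^-1 *: (tens v w - tens w v).
Definition vee (V : lmodType K) (v w : V) : tensor V V :=
  2^-1 *: (tens v w + tens w v).

Definition in_span (U : lmodType K) (X : U -> Prop) (u : U) : Prop :=
  exists s : seq (K * U), (forall p, p \in s -> X p.2) /\
    u = \sum_(p <- s) p.1 *: p.2.

Definition Lam2 (V : lmodType K) : tensor V V -> Prop :=
  in_span (fun t => exists v w, t = wedge v w).
Definition Sym2 (V : lmodType K) : tensor V V -> Prop :=
  in_span (fun t => exists v w, t = vee v w).

Definition tsub (U U' : lmodType K) (X : U -> Prop) (Y : U' -> Prop)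
  : tensor U U' -> Prop :=
  in_span (fun t => exists x y, X x /\ Y y /\ t = tens x y).

Definition is_lie (L : lmodType K) (br : L -> L -> L) : Prop :=
  [/\ forall (a : K) x x' y, br (a *: x + x') y = a *: br x y + br x' y,
      forall (a : K) x y y', br x (a *: y + y') = a *: br x y + br x y',
      forall x, br x x = 0 &
      forall x y z, br x (br y z) + br y (br z x) + br z (br x y) = 0].

(* the linear map h (x) h -> h, u (x) v |-> [u, v]; on Lambda^2(h) it is
   u /\ v |-> [u, v] *)
Definition brmap (L : lmodType K) (br : L -> L -> L) (t : tensor L L) : L :=
  \sum_(p <- trepr t) br p.1 p.2.

Definition Z2 (L : lmodType K) (br : L -> L -> L) (t : tensor L L) : Prop :=
  Lam2 t /\ brmap br t = 0.

Definition multmap (A : comAlgType K) (t : tensor A A) : A :=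
  \sum_(p <- trepr t) p.1 * p.2.
Definition IA (A : comAlgType K) (t : tensor A A) : Prop :=
  Sym2 t /\ multmap t = 0.

Variables (A : comAlgType K) (k : lmodType K) (brk : k -> k -> k).

Definition gl := tensor A k.
Definition brg (u v : gl) : gl :=
  \sum_(p <- trepr u) \sum_(q <- trepr v) tens (p.1 * q.1) (brk p.2 q.2).

(* the components of P, defined on g (x) g by extending (a x) (x) (b y) |-> ...
   linearly; restricted to Lambda^2(g) they are the maps p_1, p_2, p_3
   (ax /\ by |-> ...). *)
Definition p1 (t : tensor gl gl) : tensor (tensor A A) (tensor k k) :=
  \sum_(uv <- trepr t) \sum_(ax <- trepr uv.1) \sum_(bY <- trepr uv.2)
     tens (wedge ax.1 bY.1) (vee ax.2 bY.2).
Definition p2 (t : tensor gl gl) : tensor A (tensor k k) :=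
  \sum_(uv <- trepr t) \sum_(ax <- trepr uv.1) \sum_(bY <- trepr uv.2)
     tens (ax.1 * bY.1) (wedge ax.2 bY.2).
Definition p3 (t : tensor gl gl) : tensor (tensor A A) (tensor k k) :=
  \sum_(uv <- trepr t) \sum_(ax <- trepr uv.1) \sum_(bY <- trepr uv.2)
     tens (vee ax.1 bY.1 - vee (ax.1 * bY.1) 1) (wedge ax.2 bY.2).

End Constructions.

(* Main.v *)
Require Import Defs.
From HB Require Import structures.
From mathcomp Require Import all_boot all_order all_algebra.
From mathcomp Require Import boolp functions classical_sets.
Import GRing.Theory.
Local Open Scope ring_scope.
Set Implicit Arguments. Unset Strict Implicit. Unset Printing Implicit Defensive.
Section Gen.
Variable K : fieldType.

Definition subsp (V : lmodType K) (S : V -> Prop) :=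
  S 0 /\ forall a x y, S x -> S y -> S (a *: x + y).
Definition linf (V U : lmodType K) (f : V -> U) :=
  forall a x y, f (a *: x + y) = a *: f x + f y.

Section Lin.
Variables (V U Y : lmodType K).

Lemma linf0 (f : V -> U) : linf f -> f 0 = 0.
Proof.
move=> lf; have := lf 1 0 0; rewrite !scale1r !addr0 => H.
by apply: (@addrI _ (f 0)); rewrite addr0 -H.
Qed.
Lemma linfD (f : V -> U) : linf f -> forall x y, f (x + y) = f x + f y.
Proof. by move=> lf x y; have := lf 1 x y; rewrite !scale1r. Qed.
Lemma linfZ (f : V -> U) : linf f -> forall a x, f (a *: x) = a *: f x.
Proof. by move=> lf a x; rewrite -[a *: x]addr0 lf linf0 // addr0. Qed.
Lemma linfN (f : V -> U) : linf f -> forall x, f (- x) = - f x.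
Proof. by move=> lf x; rewrite -scaleN1r linfZ // scaleN1r. Qed.
Lemma linfB (f : V -> U) : linf f -> forall x y, f (x - y) = f x - f y.
Proof. by move=> lf x y; rewrite linfD // linfN. Qed.
Lemma linf_sum (f : V -> U) I (r : seq I) (P : pred I) (F : I -> V) : linf f ->
  f (\sum_(i <- r | P i) F i) = \sum_(i <- r | P i) f (F i).
Proof.
move=> lf; elim: r => [|i r IH]; first by rewrite !big_nil linf0.
by rewrite !big_cons; case: (P i) => //; rewrite linfD // IH.
Qed.

Lemma linf_add (f g : V -> U) : linf f -> linf g -> linf (fun x => f x + g x).
Proof.
by move=> lf lg a x y; rewrite lf lg scalerDr addrACA.
Qed.
Lemma linf_opp (f : V -> U) : linf f -> linf (fun x => - f x).
Proof. by move=> lf a x y; rewrite lf opprD scalerN. Qed.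
Lemma linf_sub (f g : V -> U) : linf f -> linf g -> linf (fun x => f x - g x).
Proof. by move=> lf lg; apply: linf_add => //; apply: linf_opp. Qed.
Lemma linf_scale c (f : V -> U) : linf f -> linf (fun x => c *: f x).
Proof. by move=> lf a x y; rewrite lf scalerDr !scalerA mulrC. Qed.
Lemma linf_comp (f : U -> Y) (g : V -> U) : linf f -> linf g -> linf (fun x => f (g x)).
Proof. by move=> lf lg a x y; rewrite lg lf. Qed.
Lemma linf_id : linf (fun x : V => x).
Proof. by []. Qed.
Lemma linf_cst0 : linf (fun _ : V => (0 : U)).
Proof. by move=> a x y; rewrite scaler0 addr0. Qed.

Lemma subsp_pre (S : U -> Prop) (f : V -> U) : linf f -> subsp S -> subsp (fun x => S (f x)).
Proof.
move=> lf [S0 Sc]; split; first by rewrite linf0.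
by move=> a x y Sx Sy; rewrite lf; apply: Sc.
Qed.
Lemma subsp_eq (f g : V -> U) : linf f -> linf g -> subsp (fun x => f x = g x).
Proof.
move=> lf lg; split; first by rewrite !linf0.
by move=> a x y ex ey; rewrite lf lg ex ey.
Qed.
Lemma subsp_and (S T : V -> Prop) : subsp S -> subsp T -> subsp (fun x => S x /\ T x).
Proof.
move=> [S0 Sc] [T0 Tc]; split => // a x y [??] [??]; split; [exact: Sc|exact: Tc].
Qed.
Lemma subsp_all I (P : I -> Prop) (T : I -> V -> Prop) :
  (forall i, P i -> subsp (T i)) -> subsp (fun x => forall i, P i -> T i x).
Proof.
move=> H; split; first by move=> i /H [].
by move=> a x y Hx Hy i Pi; case: (H i Pi) => _ Tc; apply: Tc; [apply: Hx|apply: Hy].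
Qed.
Lemma subsp_add (S : V -> Prop) : subsp S -> forall x y, S x -> S y -> S (x + y).
Proof. by move=> [_ Sc] x y Sx Sy; have := Sc 1 x y Sx Sy; rewrite scale1r. Qed.
Lemma subsp_scale (S : V -> Prop) : subsp S -> forall a x, S x -> S (a *: x).
Proof. by move=> [S0 Sc] a x Sx; rewrite -[a *: x]addr0; apply: Sc. Qed.
Lemma subsp_sub (S : V -> Prop) : subsp S -> forall x y, S x -> S y -> S (x - y).
Proof.
by move=> sS x y Sx Sy; apply: subsp_add => //; rewrite -scaleN1r; apply: subsp_scale.
Qed.
Lemma subsp_sum (S : V -> Prop) I (r : seq I) (F : I -> V) : subsp S ->
  (forall i, S (F i)) -> S (\sum_(i <- r) F i).
Proof.
move=> sS H; elim: r => [|i r IH]; first by rewrite big_nil; case: sS.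
by rewrite big_cons; apply: subsp_add.
Qed.

Lemma span_subsp (X : V -> Prop) : subsp (in_span X).
Proof.
split; first by exists [::]; rewrite big_nil.
move=> a x y [s [Hs ->]] [t [Ht ->]].
exists ([seq (a * p.1, p.2) | p <- s] ++ t); split.
  move=> p; rewrite mem_cat => /orP [/mapP [q qs ->]|/Ht //]; exact: Hs qs.
rewrite big_cat big_map /= scaler_sumr; congr (_ + _).
by apply: eq_bigr => p _; rewrite scalerA.
Qed.
Lemma span_gen (X : V -> Prop) x : X x -> in_span X x.
Proof.
by move=> Xx; exists [:: (1, x)]; split; [move=> p; rewrite inE => /eqP -> |rewrite big_seq1 scale1r].
Qed.
Lemma span_ind (X S : V -> Prop) : subsp S -> (forall x, X x -> S x) ->
  forall u, in_span X u -> S u.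
Proof.
move=> sS H u [s [Hs ->]]; elim: s Hs => [|p s IH] Hs.
  by rewrite big_nil; case: sS.
rewrite big_cons; case: sS => _ Sc; apply: Sc.
  by apply: H; apply: Hs; rewrite inE eqxx.
by apply: IH => q qs; apply: Hs; rewrite inE qs orbT.
Qed.
End Lin.
Section Sep.
Variables (V : lmodType K).
Local Open Scope classical_set_scope.

Lemma sep (S : V -> Prop) v : subsp S -> ~ S v ->
  exists phi : V -> K^o, linf phi /\ (forall x, S x -> phi x = 0) /\ phi v = 1.
Proof.
move=> sS nSv.
pose P := fun W : set V => W = set0 \/ (subsp W /\ ~ W v /\ (forall x, S x -> W x)).
have [A [PA Amax]] : exists A : set V, P A /\ (forall B, A `<` B -> ~ P B).
  apply: Zorn_bigcup => F FP Ftot.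
  have [[X0 FX0 nX0]|allE] := pselect (exists2 X, F X & X != set0); last first.
    left; apply/seteqP; split => // x [X FX Xx]; apply: allE; exists X => //.
    by apply/set0P; exists x.
  have [//|[sX0 [nX0v SX0]]] := FP X0 FX0.
    by move=> e; rewrite e eqxx in nX0.
  have Fsub : forall X, F X -> forall x, X x -> subsp X /\ ~ X v.
    move=> X FX x Xx; have [e|[? []]//] := FP X FX.
    by rewrite e in Xx.
  right; split; last split.
  - split; first by exists X0 => //; case: sX0.
    move=> a x y [X1 FX1 X1x] [X2 FX2 X2y].
    have [sX1 _] := Fsub X1 FX1 x X1x; have [sX2 _] := Fsub X2 FX2 y X2y.
    have [X12|X21] := Ftot X1 X2 FX1 FX2.
      by exists X2 => //; case: sX2 => _ c; apply: c => //; apply: X12.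
    by exists X1 => //; case: sX1 => _ c; apply: c => //; apply: X21.
  - by move=> [X FX Xv]; have [_ ] := Fsub X FX v Xv.
  - by move=> x Sx; exists X0 => //; apply: SX0.
have [A0|[sA [nAv SA]]] := PA.
  exfalso; apply: (Amax S); last by right; split => //; split.
  rewrite A0; split => //; move=> /(_ 0); case: sS => S0 _ /(_ S0).
  by [].
have claim : forall x, exists c : K, A (x - c *: v).
  move=> x; apply: contrapT => nx.
  pose B := fun y => exists w c, A w /\ y = w + c *: x.
  apply: (Amax B).
    split.
      by move=> y Ay; exists y, 0; rewrite scale0r addr0.
    move=> BA; have [w [c [Aw e]]] : B x by exists 0, 1; rewrite scale1r add0r; case: sA.
    have Ax : A x by apply: BA; exists 0, 1; rewrite scale1r add0r; split => //; case: sA.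
    by apply: nx; exists 0; rewrite scale0r subr0.
  right; split; last split.
  - split; first by exists 0, 0; rewrite scale0r addr0; split => //; case: sA.
    move=> a y z [w1 [c1 [A1 ->]]] [w2 [c2 [A2 ->]]].
    exists (a *: w1 + w2), (a * c1 + c2); split; first by case: sA => _ c; apply: c.
    by rewrite scalerDl -scalerA scalerDr addrACA.
  - move=> [w [c [Aw e]]].
    have [c0|cn0] := eqVneq c 0.
      by apply: nAv; rewrite e c0 scale0r addr0.
    apply: nx; exists c^-1.
    have -> : x - c^-1 *: v = - c^-1 *: w.
      by rewrite e scalerDr scalerA mulVf // scale1r scaleNr opprD addrA addrAC subrr add0r.
    by rewrite -[_ *: w]addr0; case: sA => A0 c'; apply: c'.
  - by move=> y Sy; exists y, 0; rewrite scale0r addr0; split => //; apply: SA.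
have uniq : forall x c c', A (x - c *: v) -> A (x - c' *: v) -> c = c'.
  move=> x c c' H1 H2; apply/eqP; apply: contraT => ne.
  have : A ((c' - c)^-1 *: (x - c *: v) + (- (c' - c)^-1) *: (x - c' *: v)).
    by apply: subsp_add => //; apply: subsp_scale.
  have -> : (c' - c)^-1 *: (x - c *: v) + (- (c' - c)^-1) *: (x - c' *: v) = v.
    have e : (x - c *: v) - (x - c' *: v) = (c' - c) *: v.
      by rewrite opprD opprK addrACA subrr add0r scalerBl addrC.
    rewrite scaleNr -scalerBr e scalerA mulVf ?scale1r //.
    by rewrite subr_eq0 eq_sym.
  by [].
pose phi : V -> K^o := fun x => projT1 (cid (claim x)).
have phiP : forall x, A (x - phi x *: v) := fun x => projT2 (cid (claim x)).
exists phi; split; last split.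
- move=> a x y; apply: (uniq (a *: x + y)) => //.
  change (A (a *: x + y - (a * phi x + phi y) *: v)).
  have -> : a *: x + y - (a * phi x + phi y) *: v =
     a *: (x - phi x *: v) + (y - phi y *: v).
    by rewrite scalerDl scalerBr scalerA opprD addrACA.
  by case: sA => _ cl; apply: cl.
- move=> x Sx; apply: (uniq x) => //; rewrite scale0r subr0; exact: SA.
- by apply: (uniq v) => //; rewrite scale1r subrr; case: sA.
Qed.
End Sep.
Section Tens.
Variables (V W : lmodType K).

Lemma tval_add (x y : tensor V W) : Defs.tval (x + y) = Defs.tval x + Defs.tval y.
Proof. by []. Qed.
Lemma tval_scale a (x : tensor V W) : Defs.tval (a *: x) = a *: Defs.tval x.
Proof. by []. Qed.
Lemma tval0 : Defs.tval (0 : tensor V W) = 0.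
Proof. by []. Qed.
Lemma tval_inj : injective (@Defs.tval K V W).
Proof. exact: val_inj. Qed.

Lemma tval_sum (s : seq (V * W)) :
  Defs.tval (\sum_(p <- s) tens p.1 p.2) = ev s.
Proof.
apply/funext => b; elim: s => [|p s IH].
  by rewrite big_nil tval0 /ev big_nil.
rewrite big_cons tval_add.
have -> : forall f g : bil V W -> K^o, (f + g) b = f b + g b by [].
by rewrite IH /ev big_cons /= /ev big_seq1.
Qed.

Lemma trepr_eq (t : tensor V W) : t = \sum_(p <- trepr t) tens p.1 p.2.
Proof.
apply: tval_inj; rewrite tval_sum /trepr.
by case: (cid _) => s /= ->.
Qed.

Lemma tensor_ind (S : tensor V W -> Prop) : subsp S ->
  (forall v w, S (tens v w)) -> forall t, S t.
Proof. by move=> sS H t; rewrite (trepr_eq t); apply: subsp_sum. Qed.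

Lemma tens_linl (w : W) : linf (fun v : V => tens v w).
Proof.
move=> a x y; apply: tval_inj; rewrite tval_add tval_scale; apply/funext => b.
rewrite /= /ev !big_seq1 /= bil_linl.
have -> : forall (f g : bil V W -> K^o), (a *: f + g) b = a * f b + g b by [].
by rewrite /ev !big_seq1.
Qed.
Lemma tens_linr (v : V) : linf (fun w : W => tens v w).
Proof.
move=> a x y; apply: tval_inj; rewrite tval_add tval_scale; apply/funext => b.
rewrite /= /ev !big_seq1 /= bil_linr.
have -> : forall (f g : bil V W -> K^o), (a *: f + g) b = a * f b + g b by [].
by rewrite /ev !big_seq1.
Qed.

Definition bilf (U : lmodType K) (beta : V -> W -> U) :=
  (forall w, linf (fun v => beta v w)) /\ (forall v, linf (beta v)).

Definition lift (U : lmodType K) (beta : V -> W -> U) (t : tensor V W) : U :=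
  \sum_(p <- trepr t) beta p.1 p.2.

Variable U : lmodType K.

Lemma lift_wd (beta : V -> W -> U) (s1 s2 : seq (V * W)) : bilf beta ->
  \sum_(p <- s1) tens p.1 p.2 = \sum_(p <- s2) tens p.1 p.2 ->
  \sum_(p <- s1) beta p.1 p.2 = \sum_(p <- s2) beta p.1 p.2.
Proof.
move=> [bl br] e; apply/eqP; rewrite -subr_eq0; apply/eqP.
apply: contrapT => ne.
have sS : subsp (fun x : U => x = 0).
  by split => // a x y -> ->; rewrite scaler0 addr0.
have [phi [lphi [_ phi1]]] := sep sS ne.
have bl' : forall (a : K) v v' w, phi (beta (a *: v + v') w) = a * phi (beta v w) + phi (beta v' w).
  by move=> a v v' w; rewrite bl lphi.
have br' : forall (a : K) v w w', phi (beta v (a *: w + w')) = a * phi (beta v w) + phi (beta v w').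
  by move=> a v w w'; rewrite br lphi.
pose b := Bil bl' br'.
have := congr1 (fun t => Defs.tval t b) e; rewrite !tval_sum /ev /=.
rewrite -!(linf_sum _ _ _ lphi) => e2.
by move: phi1; rewrite linfB // e2 subrr => /eqP; rewrite eq_sym oner_eq0.
Qed.

Lemma lift_sum (beta : V -> W -> U) (s : seq (V * W)) : bilf beta ->
  lift beta (\sum_(p <- s) tens p.1 p.2) = \sum_(p <- s) beta p.1 p.2.
Proof. by move=> bb; apply: lift_wd => //; rewrite -trepr_eq. Qed.

Lemma lift_tens (beta : V -> W -> U) v w : bilf beta -> lift beta (tens v w) = beta v w.
Proof.
move=> bb; have := lift_sum [:: (v, w)] bb; rewrite !big_seq1 /=; exact.
Qed.

Lemma lift_lin (beta : V -> W -> U) : bilf beta -> linf (lift beta).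
Proof.
move=> bb a x y.
have -> : a *: x + y = \sum_(p <- [seq (a *: q.1, q.2) | q <- trepr x] ++ trepr y) tens p.1 p.2.
  rewrite big_cat big_map /= {1}(trepr_eq x) {1}(trepr_eq y) scaler_sumr; congr (_ + _).
  by apply: eq_bigr => p _; rewrite (linfZ (tens_linl p.2)).
rewrite lift_sum // big_cat big_map /= /lift scaler_sumr; congr (_ + _).
by apply: eq_bigr => p _; case: bb => bl _; rewrite (linfZ (bl p.2)).
Qed.

Lemma lift_ext (beta beta' : V -> W -> U) t : (forall v w, beta v w = beta' v w) ->
  lift beta t = lift beta' t.
Proof. by move=> e; apply: eq_bigr => p _; rewrite e. Qed.

Lemma lift_linp (P : lmodType K) (F : P -> V -> W -> U) t :
  (forall v w, linf (fun p => F p v w)) -> linf (fun p => lift (F p) t).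
Proof.
move=> H a x y; rewrite /lift scaler_sumr -big_split /=.
by apply: eq_bigr => p _; rewrite H.
Qed.

Lemma lift_comp (Y : lmodType K) (f : U -> Y) (beta : V -> W -> U) t : linf f ->
  f (lift beta t) = lift (fun v w => f (beta v w)) t.
Proof. by move=> lf; rewrite /lift linf_sum. Qed.

End Tens.

Lemma bilf_tens (V W : lmodType K) : bilf (@tens K V W).
Proof. by split; [apply: tens_linl | apply: tens_linr]. Qed.
Lemma ind2 (V1 W1 V2 W2 : lmodType K) (P : tensor V1 W1 -> tensor V2 W2 -> Prop) :
  (forall t, subsp (fun s => P s t)) -> (forall s, subsp (P s)) ->
  (forall a b x y, P (tens a b) (tens x y)) -> forall s t, P s t.
Proof.
move=> H1 H2 H s t; move: s; apply: tensor_ind => // a b; move: t.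
by apply: tensor_ind.
Qed.

Lemma ind_tt (A B C D : lmodType K) (S : tensor (tensor A B) (tensor C D) -> Prop) :
  subsp S -> (forall a x b y, S (tens (tens a x) (tens b y))) -> forall t, S t.
Proof.
move=> sS H; apply: tensor_ind => //; apply: ind2 => //.
  by move=> t; apply: subsp_pre sS; apply: tens_linl.
by move=> s; apply: subsp_pre sS; apply: tens_linr.
Qed.

Section WV.
Variable V : lmodType K.
Lemma wedge_linl (w : V) : linf (fun v => wedge v w).
Proof. by apply: linf_scale; apply: linf_sub; [apply: tens_linl|apply: tens_linr]. Qed.
Lemma wedge_linr (v : V) : linf (fun w => wedge v w).
Proof. by apply: linf_scale; apply: linf_sub; [apply: tens_linr|apply: tens_linl]. Qed.
Lemma vee_linl (w : V) : linf (fun v => vee v w).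
Proof. by apply: linf_scale; apply: linf_add; [apply: tens_linl|apply: tens_linr]. Qed.
Lemma vee_linr (v : V) : linf (fun w => vee v w).
Proof. by apply: linf_scale; apply: linf_add; [apply: tens_linr|apply: tens_linl]. Qed.
Lemma bilf_wedge : bilf (@wedge K V).
Proof. by split; [apply: wedge_linl|apply: wedge_linr]. Qed.
Lemma bilf_vee : bilf (@vee K V).
Proof. by split; [apply: vee_linl|apply: vee_linr]. Qed.
Lemma wedge_anti (v w : V) : wedge w v = - wedge v w.
Proof. by rewrite /wedge -scalerN opprB. Qed.
Lemma vee_sym (v w : V) : vee w v = vee v w.
Proof. by rewrite /vee addrC. Qed.
Lemma Lam2_wedge (v w : V) : Lam2 (wedge v w).
Proof. by apply: span_gen; exists v, w. Qed.
Lemma Sym2_vee (v w : V) : Sym2 (vee v w).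
Proof. by apply: span_gen; exists v, w. Qed.
End WV.

Lemma half (two_unit : (2 : K) != 0) (V : lmodType K) (x : V) : 2^-1 *: (x + x) = x.
Proof. by rewrite -mulr2n -scaler_nat scalerA mulVf // scale1r. Qed.

Section Flat.
Variables (A M N : lmodType K) (f : M -> N) (L : M -> Prop).
Hypotheses (lf : linf f) (sL : subsp L).

Lemma flat n (a : nat -> A) (l : nat -> M) : (forall i, L (l i)) ->
  \sum_(i < n) tens (a i) (f (l i)) = 0 ->
  in_span (fun t => exists x y, True /\ (L y /\ f y = 0) /\ t = tens x y)
    (\sum_(i < n) tens (a i) (l i)).
Proof.
elim: n a l => [|n IH] a l Ll e.
  by rewrite big_ord0; case: (span_subsp (V := tensor A M) (fun t => exists x y, True /\ (L y /\ f y = 0) /\ t = tens x y)).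
have [[c ec]|nsp] := pselect (exists c : nat -> K, a n = \sum_(i < n) c i *: a i).
  have tr : forall (Y : lmodType K) (h : nat -> Y),
      \sum_(i < n.+1) tens (a i) (h i) = \sum_(i < n) tens (a i) (h i + c i *: h n).
    move=> Y h; rewrite big_ord_recr /= ec (linf_sum _ _ _ (tens_linl (h n))).
    rewrite -big_split /=; apply: eq_bigr => i _.
    by rewrite (linfZ (tens_linl _)) -(linfZ (tens_linr _)) (linfD (tens_linr _)).
  rewrite tr; apply: (IH a (fun i => l i + c i *: l n)).
    by move=> i; apply: subsp_add => //; apply: subsp_scale.
  by rewrite -[RHS]e (tr _ (fun i => f (l i))); apply: eq_bigr => i _; rewrite (linfD lf) (linfZ lf).
pose S := fun x : A => exists c : nat -> K, x = \sum_(i < n) c i *: a i.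
have sS : subsp S.
  split; first by exists (fun _ => 0); rewrite big1 // => i _; rewrite scale0r.
  move=> b x y [cx ->] [cy ->]; exists (fun i => b * cx i + cy i).
  by rewrite scaler_sumr -big_split; apply: eq_bigr => i _; rewrite scalerDl scalerA.
have [phi [lphi [phi0 phi1]]] := sep sS nsp.
have Sa : forall i : 'I_n, S (a i).
  move=> i; exists (fun j : nat => (j == i)%:R).
  rewrite (bigD1 i) //= eqxx scale1r big1 ?addr0 // => j ji.
  by rewrite (_ : (j == i :> nat) = false) ?scale0r //; apply/negbTE.
have bchi : bilf (fun (x : A) (y : N) => phi x *: y).
  split=> [y|x]; last by apply: linf_scale; apply: linf_id.
  by move=> b x x'; rewrite lphi scalerDl scalerA.
have fln : f (l n) = 0.
  have := congr1 (lift (fun (x : A) (y : N) => phi x *: y)) e.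
  rewrite (linf0 (lift_lin bchi)) (linf_sum _ _ _ (lift_lin bchi)) big_ord_recr /=.
  rewrite lift_tens // phi1 scale1r big1 ?add0r // => i _.
  by rewrite lift_tens // phi0 ?scale0r.
rewrite big_ord_recr /=; apply: subsp_add; first exact: span_subsp.
  apply: IH => //; move: e; rewrite big_ord_recr /= fln (linf0 (tens_linr _)) addr0; exact.
by apply: span_gen; exists (a n), (l n).
Qed.
End Flat.
Section L3.
Variables (V W U : lmodType K).
Definition quad (F : V -> W -> V -> W -> U) :=
  [/\ forall x b y, linf (fun a => F a x b y), forall a b y, linf (fun x => F a x b y),
      forall a x y, linf (fun b => F a x b y) & forall a x b, linf (fun y => F a x b y)].
Definition B2 (F : V -> W -> V -> W -> U) (u v : tensor V W) : U :=
  lift (fun a x => lift (fun b y => F a x b y) v) u.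
Definition L3 (F : V -> W -> V -> W -> U) (t : tensor (tensor V W) (tensor V W)) : U :=
  lift (B2 F) t.

Variable F : V -> W -> V -> W -> U.
Hypothesis qF : quad F.

Lemma bilf_inner a x : bilf (fun b y => F a x b y).
Proof. by case: qF => _ _ h3 h4; split. Qed.
Lemma bilf_mid v : bilf (fun a x => lift (fun b y => F a x b y) v).
Proof. by case: qF => h1 h2 _ _; split => [x|a]; apply: lift_linp. Qed.
Lemma bilf_B2 : bilf (B2 F).
Proof.
split => [v|u]; first by apply: lift_lin; apply: bilf_mid.
by apply: lift_linp => a x; apply: lift_lin; apply: bilf_inner.
Qed.
Lemma B2_tt a x b y : B2 F (tens a x) (tens b y) = F a x b y.
Proof. by rewrite /B2 lift_tens ?lift_tens //; [apply: bilf_inner|apply: bilf_mid]. Qed.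
Lemma L3_lin : linf (L3 F).
Proof. by apply: lift_lin; apply: bilf_B2. Qed.
Lemma L3_tt a x b y : L3 F (tens (tens a x) (tens b y)) = F a x b y.
Proof. by rewrite /L3 lift_tens ?B2_tt //; apply: bilf_B2. Qed.
Lemma L3_wedge (two_unit : (2 : K) != 0) :
  (forall a x b y, F b y a x = - F a x b y) ->
  forall a x b y, L3 F (wedge (tens a x) (tens b y)) = F a x b y.
Proof.
move=> anti a x b y; rewrite /wedge (linfZ L3_lin) (linfB L3_lin) !L3_tt.
by rewrite (anti a x b y) opprK half.
Qed.
End L3.

Lemma quad_tens (V W V1 W1 : lmodType K) (f : V -> V -> V1) (h : W -> W -> W1) :
  bilf f -> bilf h -> quad (fun a x b y => tens (f a b) (h x y)).
Proof.
move=> [f1 f2] [h1 h2]; split => *.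
- exact: (linf_comp (tens_linl _) (f1 _)).
- exact: (linf_comp (tens_linr _) (h1 _)).
- exact: (linf_comp (tens_linl _) (f2 _)).
- exact: (linf_comp (tens_linr _) (h2 _)).
Qed.
End Gen.
Section Main.
Variables (K : fieldType) (two_unit : (2 : K) != 0) (A : comAlgType K) (k : lmodType K)
  (brk : k -> k -> k) (lie_k : is_lie brk).

Lemma bilf_mul : bilf (fun a b : A => a * b).
Proof.
split => [b|a] c x y; first by rewrite mulrDl scalerAl.
by rewrite mulrDr scalerAr.
Qed.
Lemma bilf_brk : bilf brk.
Proof. by case: lie_k => h1 h2 _ _; split => [y|x] a u v; [apply: h1|apply: h2]. Qed.
Lemma brk_anti x y : brk y x = - brk x y.
Proof.
case: bilf_brk => bl br; case: lie_k => _ _ h0 _.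
have := h0 (x + y); rewrite (linfD (bl _)) !(linfD (br _)) !h0 add0r addr0.
by move/eqP; rewrite addrC addr_eq0 => /eqP.
Qed.

Definition F1 (a : A) (x : k) (b : A) (y : k) := tens (wedge a b) (vee x y).
Definition F2 (a : A) (x : k) (b : A) (y : k) := tens (a * b) (wedge x y).
Definition F3 (a : A) (x : k) (b : A) (y : k) := tens (vee a b - vee (a * b) 1) (wedge x y).
Definition FB (a : A) (x : k) (b : A) (y : k) := tens (a * b) (brk x y).

Lemma p1E t : p1 t = L3 F1 t. Proof. by []. Qed.
Lemma p2E t : p2 t = L3 F2 t. Proof. by []. Qed.
Lemma p3E t : p3 t = L3 F3 t. Proof. by []. Qed.
Lemma brgE t : brmap (brg brk) t = L3 FB t. Proof. by []. Qed.
Lemma brgE2 u v : brg brk u v = B2 FB u v. Proof. by []. Qed.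

Lemma bilf_f3 : bilf (fun a b : A => vee a b - vee (a * b) 1).
Proof.
case: bilf_mul => m1 m2; split => [b|a]; apply: linf_sub; try apply: vee_linl; try apply: vee_linr.
  exact: (linf_comp (vee_linl _) (m1 _)).
exact: (linf_comp (vee_linl _) (m2 _)).
Qed.

Lemma qF1 : quad F1. Proof. exact: quad_tens (bilf_wedge _) (bilf_vee _). Qed.
Lemma qF2 : quad F2. Proof. exact: quad_tens bilf_mul (bilf_wedge _). Qed.
Lemma qF3 : quad F3. Proof. exact: quad_tens bilf_f3 (bilf_wedge _). Qed.
Lemma qFB : quad FB. Proof. exact: quad_tens bilf_mul bilf_brk. Qed.

Lemma aF1 a x b y : F1 b y a x = - F1 a x b y.
Proof. by rewrite /F1 wedge_anti vee_sym (linfN (tens_linl _)). Qed.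
Lemma aF2 a x b y : F2 b y a x = - F2 a x b y.
Proof. by rewrite /F2 wedge_anti mulrC (linfN (tens_linr _)). Qed.
Lemma aF3 a x b y : F3 b y a x = - F3 a x b y.
Proof. by rewrite /F3 wedge_anti mulrC vee_sym (linfN (tens_linr _)). Qed.
Lemma aFB a x b y : FB b y a x = - FB a x b y.
Proof. by rewrite /FB brk_anti mulrC (linfN (tens_linr _)). Qed.

Notation W a x b y := (wedge (tens a x) (tens b y) : tensor (gl A k) (gl A k)).

Lemma subsp_Z2 : subsp (Z2 (brg (A:=A) brk)).
Proof.
split; first by split; [case: (span_subsp (fun t : tensor (gl A k) (gl A k) => exists v w, t = wedge v w))|rewrite brgE (linf0 (L3_lin qFB))].
move=> c x y [Lx Bx] [Ly By]; split; first by case: (span_subsp (fun t : tensor (gl A k) (gl A k) => exists v w, t = wedge v w)) => _; apply.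
by rewrite brgE (L3_lin qFB) -!brgE Bx By scaler0 addr0.
Qed.

Lemma multmapE (t : tensor A A) : multmap t = lift (fun a b : A => a * b) t. Proof. by []. Qed.
Lemma brmapE (t : tensor k k) : brmap brk t = lift brk t. Proof. by []. Qed.

Lemma multmap_vee (a b : A) : multmap (vee a b) = a * b.
Proof.
rewrite multmapE /vee (linfZ (lift_lin bilf_mul)) (linfD (lift_lin bilf_mul)) !lift_tens; try exact: bilf_mul.
by rewrite (mulrC b) half.
Qed.
Lemma brmap_wedge x y : brmap brk (wedge x y) = brk x y.
Proof.
rewrite brmapE /wedge (linfZ (lift_lin bilf_brk)) (linfB (lift_lin bilf_brk)) !lift_tens; try exact: bilf_brk.
by rewrite (brk_anti x y) opprK half.
Qed.
Lemma Wd_tens (x y : k) : lift (@wedge K k) (tens x y) = wedge x y.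
Proof. by rewrite lift_tens //; apply: bilf_wedge. Qed.
Lemma Wd_id z : Lam2 z -> lift (@wedge K k) z = z.
Proof.
move: z; apply: span_ind; first by apply: subsp_eq; [apply: lift_lin; apply: bilf_wedge|apply: linf_id].
move=> _ [x [y ->]].
rewrite /wedge (linfZ (lift_lin (bilf_wedge _))) (linfB (lift_lin (bilf_wedge _))) !Wd_tens.
by rewrite -/(wedge x y) -/(wedge y x) (wedge_anti x y) opprK half.
Qed.
Lemma Sy_id z : Sym2 z -> lift (@vee K A) z = z.
Proof.
move: z; apply: span_ind; first by apply: subsp_eq; [apply: lift_lin; apply: bilf_vee|apply: linf_id].
move=> _ [x [y ->]].
rewrite /vee (linfZ (lift_lin (bilf_vee _))) (linfD (lift_lin (bilf_vee _))) !lift_tens; try exact: bilf_vee.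
by rewrite -/(vee x y) -/(vee y x) (vee_sym x y) half.
Qed.

Lemma IA_gen (a b : A) : IA (vee a b - vee (a * b) 1).
Proof.
split; first by apply: subsp_sub; [exact: span_subsp|exact: Sym2_vee|exact: Sym2_vee].
by rewrite multmapE (linfB (lift_lin bilf_mul)) -!multmapE !multmap_vee mulr1 subrr.
Qed.

Lemma fwd_gen w : Lam2 w ->
  [/\ tsub (@Lam2 K A) (@Sym2 K k) (p1 w), tsub (fun _ : A => True) (@Lam2 K k) (p2 w)
    & tsub (@IA K A) (@Lam2 K k) (p3 w)].
Proof.
have sub3 : forall (X : tensor (tensor A A) (tensor k k) -> Prop) (Y : tensor A (tensor k k) -> Prop)
   (Z : tensor (tensor A A) (tensor k k) -> Prop), subsp X -> subsp Y -> subsp Z ->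
   subsp (fun w : tensor (gl A k) (gl A k) => [/\ X (p1 w), Y (p2 w) & Z (p3 w)]).
  move=> X Y Z sX sY sZ.
  have := subsp_and (subsp_pre (L3_lin qF1) sX) (subsp_and (subsp_pre (L3_lin qF2) sY) (subsp_pre (L3_lin qF3) sZ)).
  move=> [h0 hc]; split; first by case: h0 => ? [] ? ?; split.
  by move=> c x y [? ? ?] [? ? ?]; case: (hc c x y) => // ? [].
have sS := sub3 (tsub (@Lam2 K A) (@Sym2 K k)) (tsub (fun _ : A => True) (@Lam2 K k))
   (tsub (@IA K A) (@Lam2 K k)) (span_subsp _) (span_subsp _) (span_subsp _).
move: w; apply: span_ind; first exact: sS.
move=> _ [u [v ->]]; move: u v.
apply: ind2.
- by move=> t; apply: (subsp_pre (f := fun s => wedge s t) _ sS); apply: wedge_linl.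
- by move=> s; apply: (subsp_pre (f := fun t => wedge s t) _ sS); apply: wedge_linr.
move=> a x b y; rewrite p1E p2E p3E !L3_wedge //; try exact: qF1; try exact: qF2; try exact: qF3;
  try exact: aF1; try exact: aF2; try exact: aF3.
split; apply: span_gen.
- by exists (wedge a b), (vee x y); split; [apply: Lam2_wedge|split; [apply: Sym2_vee|]].
- by exists (a * b), (wedge x y); split => //; split; [apply: Lam2_wedge|].
- by exists (vee a b - vee (a * b) 1), (wedge x y); split; [apply: IA_gen|split; [apply: Lam2_wedge|]].
Qed.
Definition betam := lift (fun (a : A) (t : tensor k k) => tens a (brmap brk t)).
Lemma bilf_beta : bilf (fun (a : A) (t : tensor k k) => tens a (brmap brk t)).
Proof.
split=> [t|a]; first exact: tens_linl.
exact: (linf_comp (tens_linr a) (lift_lin bilf_brk)).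
Qed.
Lemma beta_p2 t : betam (p2 t) = brmap (brg (A:=A) brk) t.
Proof.
move: t; apply: ind_tt.
  apply: (subsp_eq (f := fun t => betam (L3 F2 t)) (g := L3 FB)).
    exact: (linf_comp (lift_lin bilf_beta) (L3_lin qF2)).
  exact: (L3_lin qFB).
move=> a x b y; rewrite p2E brgE !L3_tt; try exact: qF2; try exact: qFB.
by rewrite /betam /F2 /FB lift_tens ?brmap_wedge //; exact: bilf_beta.
Qed.

Definition Rrep (u : tensor A (tensor k k)) := exists n (a : nat -> A) (l : nat -> tensor k k),
  (forall i, Lam2 (l i)) /\ u = \sum_(i < n) tens (a i) (l i).

Lemma Rrep_subsp : subsp Rrep.
Proof.
have L0 : Lam2 (0 : tensor k k) by case: (span_subsp (fun t : tensor k k => exists v w, t = wedge v w)).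
split; first by exists 0%N, (fun _ => 0), (fun _ => 0); split => //; rewrite big_ord0.
move=> c x y [n1 [a1 [l1 [L1 ->]]]] [n2 [a2 [l2 [L2 ->]]]].
exists (n1 + n2)%N, (fun i => if (i < n1)%N then a1 i else a2 (i - n1)%N),
  (fun i => if (i < n1)%N then c *: l1 i else l2 (i - n1)%N); split.
  by move=> i; case: ifP => _ //; apply: subsp_scale => //; exact: span_subsp.
rewrite big_split_ord /= scaler_sumr; congr (_ + _).
  by apply: eq_bigr => i _; rewrite ltn_ord (linfZ (tens_linr _)).
apply: eq_bigr => i _; rewrite ltnNge leq_addr /=.
by rewrite addKn.
Qed.

Lemma Q2_Rrep u : tsub (fun _ : A => True) (@Lam2 K k) u -> Rrep u.
Proof.
move: u; apply: span_ind; first exact: Rrep_subsp.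
move=> _ [x [y [_ [Ly ->]]]]; exists 1%N, (fun _ => x), (fun _ => y); split => //.
by rewrite big_ord1.
Qed.

Lemma fwd w : Z2 (brg (A:=A) brk) w ->
  [/\ tsub (@Lam2 K A) (@Sym2 K k) (p1 w), tsub (fun _ : A => True) (Z2 brk) (p2 w)
    & tsub (@IA K A) (@Lam2 K k) (p3 w)].
Proof.
move=> [Lw Bw]; have [h1 h2 h3] := fwd_gen Lw; split => //.
have [n [a [l [Ll e]]]] := Q2_Rrep h2.
rewrite e; apply: (flat (lift_lin bilf_brk) (span_subsp _)) => //.
rewrite -[RHS]Bw -beta_p2 e /betam (linf_sum _ _ _ (lift_lin bilf_beta)).
by apply: eq_bigr => i _; rewrite lift_tens //; exact: bilf_beta.
Qed.
Lemma subsp_img (V U : lmodType K) (f : V -> U) (C : V -> Prop) :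
  linf f -> subsp C -> subsp (fun u => exists w, C w /\ f w = u).
Proof.
move=> lf [C0 Cc]; split; first by exists 0; split => //; rewrite linf0.
by move=> c x y [w1 [C1 <-]] [w2 [C2 <-]]; exists (c *: w1 + w2); split; [apply: Cc|rewrite lf].
Qed.

Lemma sub_eq0 (U : lmodType K) (F : A -> k -> A -> k -> U) : quad F -> subsp (fun w => L3 F w = 0).
Proof. by move=> qF; apply: subsp_eq; [apply: L3_lin|apply: linf_cst0]. Qed.

Lemma L3_W (U : lmodType K) (F : A -> k -> A -> k -> U) a x b y : quad F -> (forall a x b y, F b y a x = - F a x b y) ->
  L3 F (W a x b y) = F a x b y.
Proof. by move=> qF aF; apply: L3_wedge. Qed.

Definition C1 w := Z2 (brg (A:=A) brk) w /\ p2 w = 0 /\ p3 w = 0.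
Lemma sC1 : subsp C1.
Proof. exact: subsp_and subsp_Z2 (subsp_and (sub_eq0 qF2) (sub_eq0 qF3)). Qed.

Lemma bwd1 u : tsub (@Lam2 K A) (@Sym2 K k) u -> exists w, C1 w /\ p1 w = u.
Proof.
have sS := subsp_img (L3_lin qF1) sC1.
move: u; apply: span_ind; first exact: sS.
move=> _ [l [s [Ll [Ss ->]]]]; move: l Ll s Ss.
apply: (span_ind (S := fun l => forall s, Sym2 s -> exists w, C1 w /\ p1 w = tens l s)).
  by apply: subsp_all => s _; apply: (subsp_pre (f := fun l => tens l s)) sS; apply: tens_linl.
move=> _ [a [b ->]].
apply: (span_ind (S := fun s => exists w, C1 w /\ p1 w = tens (wedge a b) s)).
  by apply: (subsp_pre (f := fun s => tens (wedge a b) s)) sS; apply: tens_linr.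
move=> _ [x [y ->]].
exists (2^-1 *: (W a x b y + W a y b x)); split; first (split; last split).
- split.
    apply: subsp_scale; first exact: span_subsp.
    by apply: subsp_add; [exact: span_subsp|exact: Lam2_wedge|exact: Lam2_wedge].
  rewrite brgE (linfZ (L3_lin qFB)) (linfD (L3_lin qFB)) !L3_W; try exact: qFB; try exact: aFB.
  by rewrite /FB (brk_anti x y) (linfN (tens_linr _)) subrr scaler0.
- rewrite p2E (linfZ (L3_lin qF2)) (linfD (L3_lin qF2)) !L3_W; try exact: qF2; try exact: aF2.
  by rewrite /F2 (wedge_anti x y) (linfN (tens_linr _)) subrr scaler0.
- rewrite p3E (linfZ (L3_lin qF3)) (linfD (L3_lin qF3)) !L3_W; try exact: qF3; try exact: aF3.
  by rewrite /F3 (wedge_anti x y) (linfN (tens_linr _)) subrr scaler0.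
rewrite p1E (linfZ (L3_lin qF1)) (linfD (L3_lin qF1)) !L3_W; try exact: qF1; try exact: aF1.
by rewrite /F1 (vee_sym x y) half.
Qed.
Definition Ginn (a : A) := fun x y : k => 2^-1 *: (W a x 1 y + W 1 x a y).
Lemma bilf_G a : bilf (Ginn a).
Proof.
split=> [y|x]; apply: linf_scale; apply: linf_add.
- exact: (linf_comp (wedge_linl _) (tens_linr a)).
- exact: (linf_comp (wedge_linl _) (tens_linr 1)).
- exact: (linf_comp (wedge_linr _) (tens_linr 1)).
- exact: (linf_comp (wedge_linr _) (tens_linr a)).
Qed.
Definition G a := lift (Ginn a).
Lemma G_lin a : linf (G a). Proof. exact: lift_lin (bilf_G a). Qed.
Lemma G_phi (U : lmodType K) (F : A -> k -> A -> k -> U) a x y : quad F ->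
  (forall a x b y, F b y a x = - F a x b y) ->
  L3 F (G a (tens x y)) = 2^-1 *: (F a x 1 y + F 1 x a y).
Proof.
move=> qF aF; rewrite /G lift_tens; last exact: bilf_G.
by rewrite /Ginn (linfZ (L3_lin qF)) (linfD (L3_lin qF)) !L3_W.
Qed.

Section GF.
Variable a : A.
Lemma G_Lam2 t : Lam2 (G a t).
Proof.
move: t; apply: tensor_ind; first by apply: (subsp_pre (G_lin a)); exact: span_subsp.
move=> x y; rewrite /G lift_tens; last exact: bilf_G.
apply: subsp_scale; first exact: span_subsp.
by apply: subsp_add; [exact: span_subsp|exact: Lam2_wedge|exact: Lam2_wedge].
Qed.
Lemma G_p1 t : p1 (G a t) = 0.
Proof.
move: t; apply: tensor_ind.
  apply: (subsp_eq (f := fun t => L3 F1 (G a t))); last exact: linf_cst0.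
  exact: (linf_comp (L3_lin qF1) (G_lin a)).
move=> x y; rewrite p1E G_phi; try exact: qF1; try exact: aF1.
by rewrite /F1 (wedge_anti a 1) (linfN (tens_linl _)) subrr scaler0.
Qed.
Lemma G_p3 t : p3 (G a t) = 0.
Proof.
move: t; apply: tensor_ind.
  apply: (subsp_eq (f := fun t => L3 F3 (G a t))); last exact: linf_cst0.
  exact: (linf_comp (L3_lin qF3) (G_lin a)).
move=> x y; rewrite p3E G_phi; try exact: qF3; try exact: aF3.
by rewrite /F3 mulr1 mul1r (vee_sym a 1) subrr (linf0 (tens_linl _)) addr0 scaler0.
Qed.
Lemma G_p2 t : p2 (G a t) = tens a (lift (@wedge K k) t).
Proof.
move: t; apply: tensor_ind.
  apply: (subsp_eq (f := fun t => L3 F2 (G a t))).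
    exact: (linf_comp (L3_lin qF2) (G_lin a)).
  exact: (linf_comp (tens_linr a) (lift_lin (bilf_wedge _))).
move=> x y; rewrite p2E G_phi; try exact: qF2; try exact: aF2.
by rewrite /F2 mulr1 mul1r (half two_unit) lift_tens //; exact: bilf_wedge.
Qed.
Lemma G_br t : brmap (brg (A:=A) brk) (G a t) = tens a (brmap brk t).
Proof.
move: t; apply: tensor_ind.
  apply: (subsp_eq (f := fun t => L3 FB (G a t))).
    exact: (linf_comp (L3_lin qFB) (G_lin a)).
  exact: (linf_comp (tens_linr a) (lift_lin bilf_brk)).
move=> x y; rewrite brgE G_phi; try exact: qFB; try exact: aFB.
by rewrite /FB mulr1 mul1r (half two_unit) brmapE lift_tens //; exact: bilf_brk.
Qed.
End GF.

Definition C2 w := Z2 (brg (A:=A) brk) w /\ p1 w = 0 /\ p3 w = 0.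
Lemma sC2 : subsp C2.
Proof. exact: subsp_and subsp_Z2 (subsp_and (sub_eq0 qF1) (sub_eq0 qF3)). Qed.

Lemma bwd2 u : tsub (fun _ : A => True) (Z2 brk) u -> exists w, C2 w /\ p2 w = u.
Proof.
move: u; apply: span_ind; first exact: (subsp_img (L3_lin qF2) sC2).
move=> _ [a [z [_ [[Lz Bz] ->]]]]; exists (G a z); split; first (split; last split).
- by split; [exact: G_Lam2|rewrite G_br Bz (linf0 (tens_linr _))].
- exact: G_p1.
- exact: G_p3.
by rewrite G_p2 Wd_id.
Qed.
Definition Hin (a b : A) := fun x y : k => 2^-1 *: (W a x b y - W a y b x).
Lemma bilf_Hin a b : bilf (Hin a b).
Proof.
split=> [y|x]; apply: linf_scale; apply: linf_sub.
- exact: (linf_comp (wedge_linl _) (tens_linr a)).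
- exact: (linf_comp (wedge_linr _) (tens_linr b)).
- exact: (linf_comp (wedge_linr _) (tens_linr b)).
- exact: (linf_comp (wedge_linl _) (tens_linr a)).
Qed.
Definition Hmid (t : tensor k k) := fun a b : A => lift (Hin a b) t.
Lemma bilf_Hmid t : bilf (Hmid t).
Proof.
split=> [b|a]; apply: lift_linp => x y; apply: linf_scale; apply: linf_sub.
- exact: (linf_comp (wedge_linl _) (tens_linl x)).
- exact: (linf_comp (wedge_linl _) (tens_linl y)).
- exact: (linf_comp (wedge_linr _) (tens_linl y)).
- exact: (linf_comp (wedge_linr _) (tens_linl x)).
Qed.
Definition H s t := lift (Hmid t) s.
Lemma H_lins t : linf (fun s => H s t). Proof. exact: lift_lin (bilf_Hmid t). Qed.
Lemma H_lint s : linf (H s).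
Proof. by apply: lift_linp => a b; apply: lift_lin; apply: bilf_Hin. Qed.
Lemma H_phi (U : lmodType K) (F : A -> k -> A -> k -> U) a b x y : quad F ->
  (forall a x b y, F b y a x = - F a x b y) ->
  L3 F (H (tens a b) (tens x y)) = 2^-1 *: (F a x b y - F a y b x).
Proof.
move=> qF aF; rewrite /H lift_tens; last exact: bilf_Hmid.
rewrite /Hmid lift_tens; last exact: bilf_Hin.
by rewrite /Hin (linfZ (L3_lin qF)) (linfB (L3_lin qF)) !L3_W.
Qed.

Lemma H_ind (U : lmodType K) (F : A -> k -> A -> k -> U) (R : tensor A A -> tensor k k -> U) :
  quad F -> (forall t, linf (fun s => R s t)) -> (forall s, linf (R s)) ->
  (forall a b x y, L3 F (H (tens a b) (tens x y)) = R (tens a b) (tens x y)) ->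
  forall s t, L3 F (H s t) = R s t.
Proof.
move=> qF R1 R2 Hg; apply: ind2 => //.
  move=> t; apply: (subsp_eq (f := fun s => L3 F (H s t))) => //.
  exact: (linf_comp (L3_lin qF) (H_lins t)).
move=> s; apply: (subsp_eq (f := fun t => L3 F (H s t))) => //.
exact: (linf_comp (L3_lin qF) (H_lint s)).
Qed.

Lemma H_Lam2 s t : Lam2 (H s t).
Proof.
move: s t; apply: ind2.
- by move=> t; apply: (subsp_pre (f := fun s => H s t)); [exact: H_lins|exact: span_subsp].
- by move=> s; apply: (subsp_pre (f := H s)); [exact: H_lint|exact: span_subsp].
move=> a b x y; rewrite /H lift_tens; last exact: bilf_Hmid.
rewrite /Hmid lift_tens; last exact: bilf_Hin.
apply: subsp_scale; first exact: span_subsp.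
by apply: subsp_sub; [exact: span_subsp|exact: Lam2_wedge|exact: Lam2_wedge].
Qed.

Lemma H_p1 s t : p1 (H s t) = 0.
Proof.
rewrite p1E; apply: (H_ind (R := fun _ _ => 0)) => //; try exact: qF1.
- by move=> *; exact: linf_cst0.
- by move=> *; exact: linf_cst0.
move=> a b x y; rewrite H_phi; try exact: qF1; try exact: aF1.
by rewrite /F1 (vee_sym x y) subrr scaler0.
Qed.

Lemma H_p2 s t : p2 (H s t) = tens (multmap s) (lift (@wedge K k) t).
Proof.
rewrite p2E; apply: (H_ind (R := fun s t => tens (multmap s) (lift (@wedge K k) t))); try exact: qF2.
- by move=> t0; exact: (linf_comp (tens_linl _) (lift_lin bilf_mul)).
- by move=> s'; exact: (linf_comp (tens_linr _) (lift_lin (bilf_wedge _))).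
move=> a b x y; rewrite H_phi; try exact: qF2; try exact: aF2.
rewrite /F2 (wedge_anti x y) (linfN (tens_linr _)) opprK (half two_unit).
by rewrite multmapE !lift_tens //; [exact: bilf_wedge|exact: bilf_mul].
Qed.

Lemma H_p3 s t : p3 (H s t) = tens (lift (@vee K A) s - vee (multmap s) 1) (lift (@wedge K k) t).
Proof.
rewrite p3E; apply: (H_ind (R := fun s t => tens (lift (@vee K A) s - vee (multmap s) 1) (lift (@wedge K k) t))); try exact: qF3.
- move=> t0; apply: (linf_comp (tens_linl _)); apply: linf_sub; first exact: lift_lin (bilf_vee _).
  exact: (linf_comp (vee_linl 1) (lift_lin bilf_mul)).
- by move=> s'; exact: (linf_comp (tens_linr _) (lift_lin (bilf_wedge _))).
move=> a b x y; rewrite H_phi; try exact: qF3; try exact: aF3.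
rewrite /F3 (wedge_anti x y) (linfN (tens_linr _)) opprK (half two_unit).
by rewrite multmapE !lift_tens //; [exact: bilf_wedge|exact: bilf_mul|exact: bilf_vee].
Qed.

Lemma H_br s t : brmap (brg (A:=A) brk) (H s t) = tens (multmap s) (brmap brk t).
Proof.
rewrite brgE; apply: (H_ind (R := fun s t => tens (multmap s) (brmap brk t))); try exact: qFB.
- by move=> t0; exact: (linf_comp (tens_linl _) (lift_lin bilf_mul)).
- by move=> s'; exact: (linf_comp (tens_linr _) (lift_lin bilf_brk)).
move=> a b x y; rewrite H_phi; try exact: qFB; try exact: aFB.
rewrite /FB (brk_anti x y) (linfN (tens_linr _)) opprK (half two_unit).
by rewrite multmapE brmapE !lift_tens //; [exact: bilf_brk|exact: bilf_mul].
Qed.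

Definition C3 w := Z2 (brg (A:=A) brk) w /\ p1 w = 0 /\ p2 w = 0.
Lemma sC3 : subsp C3.
Proof. exact: subsp_and subsp_Z2 (subsp_and (sub_eq0 qF1) (sub_eq0 qF2)). Qed.

Lemma bwd3 u : tsub (@IA K A) (@Lam2 K k) u -> exists w, C3 w /\ p3 w = u.
Proof.
move: u; apply: span_ind; first exact: (subsp_img (L3_lin qF3) sC3).
move=> _ [i [l [[Si Mi] [Ll ->]]]]; exists (H i l); split; first (split; last split).
- by split; [exact: H_Lam2|rewrite H_br Mi (linf0 (tens_linl _))].
- exact: H_p1.
- by rewrite H_p2 Mi (linf0 (tens_linl _)).
by rewrite H_p3 Mi Sy_id // Wd_id // (linf0 (vee_linl 1)) subr0.
Qed.
End Main.
Unset Implicit Arguments.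

Theorem lemma2p1 (K : fieldType) (two_unit : (2 : K) != 0)
  (A : comAlgType K) (k : lmodType K) (brk : k -> k -> k)
  (lie_k : is_lie brk)
  (u1 : tensor (tensor A A) (tensor k k)) (u2 : tensor A (tensor k k))
  (u3 : tensor (tensor A A) (tensor k k)) :
  (exists w : tensor (gl A k) (gl A k),
      Z2 (brg brk) w /\ p1 w = u1 /\ p2 w = u2 /\ p3 w = u3)
  <->
  [/\ tsub (@Lam2 K A) (@Sym2 K k) u1,
      tsub (fun _ : A => True) (Z2 brk) u2 &
      tsub (@IA K A) (@Lam2 K k) u3].
Proof.
split.
  by move=> [w [Zw [<- [<- <-]]]]; apply: (@fwd K two_unit A k brk lie_k w Zw).
move=> [h1 h2 h3].
have [w1 [[Z1 [q12 q13]] e1]] := @bwd1 K two_unit A k brk lie_k u1 h1.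
have [w2 [[Z2' [q21 q23]] e2]] := @bwd2 K two_unit A k brk lie_k u2 h2.
have [w3 [[Z3 [q31 q32]] e3]] := @bwd3 K two_unit A k brk lie_k u3 h3.
exists (w1 + w2 + w3); split.
  by apply: subsp_add; [exact: subsp_Z2 lie_k|apply: subsp_add => //; exact: subsp_Z2 lie_k|].
rewrite !p1E !p2E !p3E !(linfD (L3_lin (qF1 _ _))) !(linfD (L3_lin (qF2 _ _))) !(linfD (L3_lin (qF3 _ _))).
rewrite -!p1E -!p2E -!p3E e1 e2 e3 q12 q13 q21 q23 q31 q32.
by rewrite !addr0 !add0r.
Qed.
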